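(* If there exists a skew Room frame of type $t^u$, then there exists a $[2,2]$-GDC$(6)$ of type $(6t)^u$ with size $6t^2u(u-1)$.
   Context: Let $S$ be a finite set with a partition $\{S_1,\dots,S_n\}$. An $\{S_1,\dots,S_n\}$-Room frame is an $|S|\times|S|$ array $F$ indexed by $S$ such that: (1) every cell is empty or contains an unordered pair of symbols of $S$; (2) the subarrays $S_i\times S_i$ are empty; (3) each symbol $x\notin S_i$ occurs exactly once in row $s$ and exactly once in column $s$ for every $s\in S_i$; (4) the pairs occurring in $F$ are exactly those $\{s,t\}$ with $(s,t)\in (S\times S)\setminus\bigcup_i(S_i\times S_i)$. It has type $t^u$ if there are $u$ parts, each of size $t$. It is skew if whenever cell $(i,j)$ is filled, cell $(j,i)$ is empty. Ternary codes: a ternary code on a finite set $X$ is a subset $\mathcal C\subseteq\mathbb Z_3^X$; Hamming distance between $u,v$ is $|\{x:u_x\neq v_x\}|$; $u$ has composition $[w_1,w_2]$ if exactly $w_1$ coordinates equal $1$ and exactly $w_2$ equal $2$. A $[w_1,w_2]$-GDC$(d)$ is a triple $(X,\mathcal G,\mathcal C)$ where $\mathcal G$ is a partition of $X$ into groups and $\mathcal C\subseteq\mathbb Z_3^X$ is such that every codeword has composition $[w_1,w_2]$, any two distinct codewords have Hamming distance at least $d$, and every codeword has at most one nonzero coordinate in each group. Its type is the multiset of group sizes, written in exponential notation ($g_1^{t_1}\cdots g_s^{t_s}$ means $t_i$ groups of size $g_i$); its size is $|\mathcal C|$. *)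

(* Defs.v *)
From mathcomp Require Import all_boot.
Set Implicit Arguments. Unset Strict Implicit. Unset Printing Implicit Defensive.

(* Partition {S_1,...,S_n} of a finite set S: a finset partition P of [set: S]
   (blocks nonempty, pairwise disjoint, covering S).  "Same part" is
   pblock P s == pblock P s'. *)
Definition same_part (S : finType) (P : {set {set S}}) (s s' : S) : bool :=
  pblock P s == pblock P s'.

Definition has_type (X : finType) (P : {set {set X}}) (g u : nat) : Prop :=
  #|P| = u /\ forall B, B \in P -> #|B| = g.

(* An array indexed by S x S whose cells are empty (None) or contain a set. *)
Definition room_frame (S : finType) (P : {set {set S}})
    (F : S -> S -> option {set S}) : Prop :=
  [/\
      (forall s t p, F s t = Some p -> #|p| = 2),
      (forall s t, same_part P s t -> F s t = None),
      (* (3) each symbol x not in the part of s occurs exactly once in row s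
             and exactly once in column s *)
      (forall s x, ~~ same_part P s x ->
         #|[set c | if F s c is Some p then x \in p else false]| = 1 /\
         #|[set r | if F r s is Some p then x \in p else false]| = 1) &
      (* (4) the pairs occurring in F are exactly the {s,t} with s, t in
             different parts *)
      (forall p, (exists r c, F r c = Some p) <->
         (exists s t, ~~ same_part P s t /\ p = [set s; t]))].

Definition skew (S : finType) (F : S -> S -> option {set S}) : Prop :=
  forall i j, F i j <> None -> F j i = None.

(* Ternary codes: alphabet Z_3 represented by 'I_3 (values 0,1,2). *)
Definition hamming (X : finType) (u v : {ffun X -> 'I_3}) : nat :=
  #|[set x | u x != v x]|.

Definition has_composition (X : finType) (u : {ffun X -> 'I_3}) (w1 w2 : nat)
  : Prop :=
  #|[set x | val (u x) == 1]| = w1 /\ #|[set x | val (u x) == 2]| = w2.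

Definition is_GDC (X : finType) (G : {set {set X}}) (C : {set {ffun X -> 'I_3}})
    (w1 w2 d : nat) : Prop :=
  [/\ partition G [set: X],
      (forall c, c \in C -> has_composition c w1 w2),
      (forall c c', c \in C -> c' \in C -> c != c' -> d <= hamming c c') &
      (forall c B, c \in C -> B \in G -> #|[set x in B | val (c x) != 0]| <= 1)].

(* Main.v *)
Require Import Defs.
From mathcomp Require Import all_boot.
From mathcomp Require Import zify.
Set Implicit Arguments. Unset Strict Implicit. Unset Printing Implicit Defensive.

Definition mem2 (S : finType) (F : S -> S -> option {set S}) r c x :=
  if F r c is Some p then x \in p else false.

Section RowCount.
Variables (S : finType) (P : {set {set S}}) (F : S -> S -> option {set S}).
Hypothesis H2 : forall s t, same_part P s t -> F s t = None.
Hypothesis H3 : forall s x, ~~ same_part P s x -> #|[set c | mem2 F s c x]| = 1.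
Hypothesis Hsk : skew F.
Hypothesis Hpair : forall r c p, F r c = Some p -> #|p| = 2.

Local Notation sp := (same_part P).
Definition crossO := [set st : S * S | ~~ sp st.1 st.2].
Definition cellT := [set st : S * S | F st.1 st.2 != None].

Lemma sp_sym a b : sp a b = sp b a.
Proof. by rewrite /same_part eq_sym. Qed.

Lemma cellT_le : 2 * #|cellT| <= #|crossO|.
Proof.
pose sw := fun st : S * S => (st.2, st.1).
have inj : injective sw by case=> a b [c d] [-> ->].
have dis : [disjoint cellT & sw @: cellT].
  rewrite -setI_eq0; apply/eqP/setP => [[a b]]; rewrite !inE.
  apply/negbTE; apply/negP => /andP [Hab /imsetP [[c d] Hcd [Ha Hb]]].
  subst a b.
  move: Hcd; rewrite inE /= => Hcd.
  by move: Hab; rewrite /= (Hsk (fun e => elimN eqP Hcd e)) eqxx.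
have -> : 2 * #|cellT| = #|cellT :|: sw @: cellT|.
  by rewrite cardsU (card_imset _ inj) (disjoint_setI0 dis) cards0 subn0 mul2n addnn.
apply: subset_leq_card; apply/subsetP => [[a b]]; rewrite !inE /=.
case/orP => [H | /imsetP [[c d] Hcd [Ha Hb]]]; last subst a b.
  by apply/negP => /H2; move/eqP: H.
move: Hcd; rewrite inE /= => Hcd; rewrite sp_sym; apply/negP => /H2 H.
by rewrite H eqxx in Hcd.
Qed.

Definition rterm (st : S * S) := #|[set x | mem2 F st.1 st.2 x && ~~ sp st.1 x]|.

Lemma card_sum (T : finType) (Q : pred T) : #|[set x | Q x]| = \sum_x (Q x : nat).
Proof. by rewrite -sum1dep_card big_mkcond /=; apply: eq_bigr => i _; case: (Q i). Qed.

Lemma rowsum : \sum_st rterm st = #|crossO|.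
Proof.
rewrite /rterm -(pair_bigA _ (fun r c => #|[set x | mem2 F r c x && ~~ sp r x]|)) /=.
rewrite /crossO card_sum -(pair_bigA _ (fun r x => (~~ sp r x : nat))) /=.
apply: eq_bigr => r _.
under eq_bigr do rewrite card_sum.
rewrite exchange_big /=; apply: eq_bigr => x _.
case Hx: (sp r x) => /=.
  by apply: big1 => c _; rewrite andbF.
by rewrite -(H3 (negbT Hx)) card_sum; apply: eq_bigr => c _; rewrite andbT.
Qed.

Lemma rterm_le st : rterm st <= 2 * (st \in cellT).
Proof.
rewrite /rterm inE /mem2; case E: (F st.1 st.2) => [p|] /=.
  rewrite muln1 -(Hpair E); apply: subset_leq_card; apply/subsetP => x; rewrite inE.
  by case/andP.
by rewrite leqn0 cards_eq0; apply/eqP/setP => x; rewrite !inE.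
Qed.

Lemma sum_ind (A : {set S * S}) : \sum_st (st \in A : nat) = #|A|.
Proof. by rewrite -sum1_card [RHS]big_mkcond; apply: eq_bigr => i _; case: (i \in A). Qed.

Lemma cellT_eq : 2 * #|cellT| = #|crossO|.
Proof.
apply/eqP; rewrite eqn_leq cellT_le /= -rowsum -sum_ind big_distrr /=.
by apply: leq_sum => st _; exact: rterm_le.
Qed.

Lemma rterm_eq st : st \in cellT -> rterm st = 2.
Proof.
have H := leqif_sum (P := predT) (fun i _ => leqif_eq (rterm_le i)).
move: H => [_]; rewrite rowsum -cellT_eq -sum_ind big_distrr /= eqxx.
move/esym/forallP => H Hst; move: (H st) => /= /eqP ->; by rewrite Hst.
Qed.

Lemma row_out r c p x : F r c = Some p -> x \in p -> ~~ sp r x.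
Proof.
move=> E Hx.
have Ht : (r, c) \in cellT by rewrite inE /= E.
have := rterm_eq Ht; rewrite /rterm /mem2 /= E => Hc.
have : [set x | (x \in p) && ~~ sp r x] == p.
  rewrite eqEcard Hc (Hpair E) leqnn andbT; apply/subsetP => y.
  by rewrite inE => /andP [].
by move/eqP/setP/(_ x); rewrite inE Hx /=.
Qed.

End RowCount.


Definition off (ro : nat) (b : bool) : nat :=
  match ro with 0 => 0 | 1 => 3 | _ => if b then 4 else 1 end.
Definition pos (ro : nat) (b : bool) (j : nat) : nat := (j + off ro b) %% 6.
Definition vl (ro : nat) (b : bool) : nat :=
  if ro == 2 then (if b then 1 else 2) else (if b then 2 else 1).
Definition cls (a c : nat) : nat :=
  match a, c with 2,2 => 1 | 0,1 => 2 | 1,0 => 2 | 0,2 => 3 | 2,0 => 4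
  | 1,2 => 5 | 2,1 => 6 | _,_ => 0 end.

Definition all3 (P : nat -> bool) := all P (iota 0 3).
Definition all6 (P : nat -> bool) := all P (iota 0 6).
Definition allb (P : bool -> bool) := P true && P false.

Definition pairB : bool :=
  all3 (fun a => all3 (fun c => all3 (fun a' => all3 (fun c' =>
  allb (fun b => allb (fun b' => all6 (fun j => all6 (fun j' =>
   (cls a c != 0) ==> (cls a' c' != 0) ==>
   (((a == a') && (c == c') && ((b, j) != (b', j'))) || (cls a c != cls a' c')) ==>
   (pos a b j == pos a' b' j') ==> (pos c b j == pos c' b' j') ==>
   (vl a b != vl a' b'))))))))).

Lemma pairB_ok : pairB. Proof. by vm_compute. Qed.

Definition tripB : bool :=
  all3 (fun a1 => all3 (fun a2 => all3 (fun a3 =>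
  all3 (fun a1' => all3 (fun a2' => all3 (fun a3' =>
  allb (fun b => allb (fun b' => all6 (fun j => all6 (fun j' =>
   [&& cls a1 a2 != 0, cls a1 a3 != 0, cls a2 a3 != 0,
       cls a1' a2' != 0, cls a1' a3' != 0 & cls a2' a3' != 0] ==>
   ~~ [&& a1 == 2, a2 == 2 & a3 == 2] ==>
   ~~ [&& a1' == 2, a2' == 2 & a3' == 2] ==>
   ([&& a1 == a1', a2 == a2', a3 == a3' & (b, j) != (b', j')] ||
    [&& cls a1 a2 != cls a1' a2', cls a1 a3 != cls a1' a3' & cls a2 a3 != cls a2' a3']) ==>
   ~~ [&& pos a1 b j == pos a1' b' j', pos a2 b j == pos a2' b' j' & pos a3 b j == pos a3' b' j']
  )))))))))).

Lemma tripB_ok : tripB. Proof. by vm_compute. Qed.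

Lemma all3P (Q : nat -> bool) : all3 Q -> forall a, a < 3 -> Q a.
Proof. by move/allP => H a Ha; apply: H; rewrite mem_iota. Qed.
Lemma all6P (Q : nat -> bool) : all6 Q -> forall a, a < 6 -> Q a.
Proof. by move/allP => H a Ha; apply: H; rewrite mem_iota. Qed.
Lemma allbP (Q : bool -> bool) : allb Q -> forall b, Q b.
Proof. by case/andP => ? ? []. Qed.

Lemma pair_fact a c a' c' b b' j j' : a < 3 -> c < 3 -> a' < 3 -> c' < 3 -> j < 6 -> j' < 6 ->
  cls a c != 0 -> cls a' c' != 0 ->
  ((a == a') && (c == c') && ((b, j) != (b', j'))) || (cls a c != cls a' c') ->
  pos a b j == pos a' b' j' -> pos c b j == pos c' b' j' -> vl a b != vl a' b'.
Proof.
move=> Ha Hc Ha' Hc' Hj Hj'.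
have := pairB_ok; rewrite /pairB => H.
move: (all3P H Ha) => {}H; move: (all3P H Hc) => {}H; move: (all3P H Ha') => {}H.
move: (all3P H Hc') => {}H; move: (allbP H b) => {}H; move: (allbP H b') => {}H.
move: (all6P H Hj) => {}H; move: (all6P H Hj') => {}H.
by move=> H1 H2 H3 H4 H5; move: H; rewrite H1 H2 H3 H4 H5.
Qed.

Lemma trip_fact a1 a2 a3 a1' a2' a3' b b' j j' :
  a1 < 3 -> a2 < 3 -> a3 < 3 -> a1' < 3 -> a2' < 3 -> a3' < 3 -> j < 6 -> j' < 6 ->
  [&& cls a1 a2 != 0, cls a1 a3 != 0, cls a2 a3 != 0,
       cls a1' a2' != 0, cls a1' a3' != 0 & cls a2' a3' != 0] ->
   ~~ [&& a1 == 2, a2 == 2 & a3 == 2] ->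
   ~~ [&& a1' == 2, a2' == 2 & a3' == 2] ->
   ([&& a1 == a1', a2 == a2', a3 == a3' & (b, j) != (b', j')] ||
    [&& cls a1 a2 != cls a1' a2', cls a1 a3 != cls a1' a3' & cls a2 a3 != cls a2' a3']) ->
   ~~ [&& pos a1 b j == pos a1' b' j', pos a2 b j == pos a2' b' j' & pos a3 b j == pos a3' b' j'].
Proof.
move=> H1 H2 H3 H4 H5 H6 Hj Hj'.
have := tripB_ok; rewrite /tripB => H.
move: (all3P H H1) => {}H; move: (all3P H H2) => {}H; move: (all3P H H3) => {}H.
move: (all3P H H4) => {}H; move: (all3P H H5) => {}H; move: (all3P H H6) => {}H.
move: (allbP H b) => {}H; move: (allbP H b') => {}H.
move: (all6P H Hj) => {}H; move: (all6P H Hj') => {}H.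
by move=> K1 K2 K3 K4; move: H; rewrite K1 K2 K3 K4.
Qed.


Lemma ham6 (X : finType) (u v : {ffun X -> 'I_3}) :
  #|[set z | u z != ord0]| = 4 -> #|[set z | v z != ord0]| = 4 ->
  (forall z1 z2, z1 \in [set z | u z != ord0] :&: [set z | v z != ord0] ->
     z2 \in [set z | u z != ord0] :&: [set z | v z != ord0] -> z1 != z2 -> u z1 != v z1) ->
  (forall z1 z2 z3, z1 \in [set z | u z != ord0] :&: [set z | v z != ord0] ->
     z2 \in [set z | u z != ord0] :&: [set z | v z != ord0] ->
     z3 \in [set z | u z != ord0] :&: [set z | v z != ord0] ->
     z1 != z2 -> z1 != z3 -> z2 != z3 -> False) ->
  6 <= hamming u v.
Proof.
set Su := [set z | u z != ord0]; set Sv := [set z | v z != ord0].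
set I := Su :&: Sv => Hu Hv Hpair Htrip.
have HI : #|I| <= 2.
  rewrite leqNgt; apply/negP => H3.
  have [z1 Hz1] : exists z1, z1 \in I.
    by apply/set0Pn; rewrite -card_gt0; apply: leq_trans H3.
  have H2 : 1 < #|I :\ z1| by move: H3; rewrite (cardsD1 z1) Hz1.
  have [z2 Hz2] : exists z2, z2 \in I :\ z1.
    by apply/set0Pn; rewrite -card_gt0; apply: ltnW.
  have H1 : 0 < #|I :\ z1 :\ z2| by move: H2; rewrite (cardsD1 z2 (I :\ z1)) Hz2.
  have [z3 Hz3] : exists z3, z3 \in I :\ z1 :\ z2 by apply/set0Pn; rewrite -card_gt0.
  move: Hz2 Hz3; rewrite !inE => /andP [n21 Hz2] /andP [n32 /andP [n31 Hz3]].
  apply: (Htrip z1 z2 z3) => //; rewrite ?inE ?Hz2 ?Hz3 // eq_sym //.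
have HIU : I \subset Su :|: Sv by apply/subsetP => z; rewrite !inE => /andP [-> _].
have HU : #|Su :|: Sv| = 8 - #|I|.
  by apply/eqP; rewrite -(eqn_add2r #|I|) cardsUI Hu Hv subnK //; apply: leq_trans HI _.
have Hsub : (Su :|: Sv) :\: I \subset [set z | u z != v z].
  apply/subsetP => z; rewrite !inE => /andP [HnI HU'].
  case Hzu: (u z == ord0); case Hzv: (v z == ord0); rewrite ?Hzu ?Hzv /= in HnI HU'.
  - by [].
  - by rewrite (eqP Hzu) eq_sym Hzv.
  - by rewrite (eqP Hzv) Hzu.
  - by [].
rewrite /hamming.
case: (ltnP #|I| 2) => HI2.
  apply: leq_trans (subset_leq_card Hsub); rewrite cardsDS // HU.
  by move: HI2; case: #|I| => [|[|]].
have HI2' : #|I| = 2 by apply/eqP; rewrite eqn_leq HI HI2.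
have Hsub2 : Su :|: Sv \subset [set z | u z != v z].
  apply/subsetP => z Hz; case HzI : (z \in I).
    have [z' Hz'] : exists z', z' \in I :\ z.
      by apply/set0Pn; rewrite -card_gt0; move: HI2'; rewrite (cardsD1 z) HzI add1n => [[->]].
    move: Hz'; rewrite !inE => /andP [nz Hz'].
    apply: (Hpair z z') => //; rewrite ?inE // eq_sym //.
  by apply: (subsetP Hsub); rewrite in_setD HzI Hz.
by apply: leq_trans (subset_leq_card Hsub2); rewrite HU HI2'.
Qed.


Section Frame.
Variables (S : finType) (P : {set {set S}}) (F : S -> S -> option {set S}).
Hypothesis HF : room_frame P F.
Hypothesis Hsk : skew F.
Local Notation sp := (same_part P).

Lemma fr_H2 s t : sp s t -> F s t = None.
Proof. by case: HF => _ H _ _; exact: H. Qed.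

Lemma fr_cell r c p : F r c = Some p -> exists s t, ~~ sp s t /\ p = [set s; t].
Proof. case: HF => _ _ _ H4 E; apply/H4; by exists r, c. Qed.

Lemma sp_refl a : sp a a.
Proof. exact: eqxx. Qed.

Lemma fr_pair r c p : F r c = Some p -> #|p| = 2.
Proof.
move/fr_cell => [s [t [Hst ->]]]; rewrite cards2.
by case: eqP Hst => // ->; rewrite sp_refl.
Qed.

Lemma fr_row s x : ~~ sp s x -> #|[set c | mem2 F s c x]| = 1.
Proof. by case: HF => _ _ H _ /H []. Qed.

Definition Ft (r c : S) := F c r.

Lemma fr_col s x : ~~ sp s x -> #|[set c | mem2 Ft s c x]| = 1.
Proof. by case: HF => _ _ H _ /H []. Qed.

Lemma fr_H2t s t : sp s t -> Ft s t = None.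
Proof. by rewrite sp_sym => /fr_H2. Qed.

Lemma skew_t : skew Ft.
Proof. by move=> i j; apply: Hsk. Qed.

Lemma fr_pair_t r c p : Ft r c = Some p -> #|p| = 2.
Proof. exact: fr_pair. Qed.

Lemma cell_row_out r c p x : F r c = Some p -> x \in p -> ~~ sp r x.
Proof. exact: (row_out fr_H2 fr_row Hsk fr_pair). Qed.

Lemma cell_col_out r c p x : F r c = Some p -> x \in p -> ~~ sp c x.
Proof. exact: (row_out (F := Ft) fr_H2t fr_col skew_t fr_pair_t). Qed.

Lemma cellT_eqF : 2 * #|cellT F| = #|crossO P|.
Proof. exact: (cellT_eq fr_H2 fr_row Hsk fr_pair). Qed.

Lemma row_uniq r c1 c2 x : mem2 F r c1 x -> mem2 F r c2 x -> c1 = c2.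
Proof.
move=> H1 H2.
have Hx : ~~ sp r x.
  move: H1; rewrite /mem2; case E: (F r c1) => [p|] // Hp.
  exact: cell_row_out E Hp.
have := fr_row Hx; move/eqP/cards1P => [c0 Hc0].
have : c1 \in [set c | mem2 F r c x] by rewrite inE.
have : c2 \in [set c | mem2 F r c x] by rewrite inE.
by rewrite Hc0 !inE => /eqP -> /eqP ->.
Qed.

Lemma col_uniq c r1 r2 x : mem2 F r1 c x -> mem2 F r2 c x -> r1 = r2.
Proof.
move=> H1 H2.
have Hx : ~~ sp c x.
  move: H1; rewrite /mem2; case E: (F r1 c) => [p|] // Hp.
  exact: cell_col_out E Hp.
have := fr_col Hx; move/eqP/cards1P => [c0 Hc0].
have : r1 \in [set r | mem2 Ft c r x] by rewrite inE.
have : r2 \in [set r | mem2 Ft c r x] by rewrite inE.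
by rewrite Hc0 !inE => /eqP -> /eqP ->.
Qed.

Definition pairsP := [set [set st.1; st.2] | st in crossO P].
Definition fcell (st : S * S) := odflt set0 (F st.1 st.2).

Lemma fcell_img : fcell @: cellT F = pairsP.
Proof.
apply/setP => p; apply/imsetP/imsetP.
  move=> [[r c]]; rewrite inE /fcell /=; case E: (F r c) => [q|] // _ ->.
  move: (fr_cell E) => [s [t [Hst ->]]]; exists (s, t) => //; by rewrite inE.
move=> [[s t]]; rewrite inE /= => Hst ->.
case: HF => _ _ _ H4.
have [r [c E]] : exists r c, F r c = Some [set s; t] by apply/H4; exists s, t.
by exists (r, c); rewrite ?inE /fcell /= E.
Qed.

Lemma crossO_le : #|crossO P| <= 2 * #|pairsP|.
Proof.
rewrite -sum1_card (partition_big_imset (fun st : S * S => [set st.1; st.2])) /=.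
rewrite -/pairsP -sum1_card big_distrr /=; apply: leq_sum => p /imsetP [[a b] Hab ->] /=.
rewrite muln1 sum1dep_card.
apply: leq_trans (_ : #|[set (a, b); (b, a)]| <= 2); last by rewrite cards2; case: (_ != _).
apply: subset_leq_card; apply/subsetP => [[x y]]; rewrite !inE /= => /andP [Hxy /eqP E].
have Hxy' : x != y by apply: contra Hxy => /eqP ->; exact: sp_refl.
have : x \in [set a; b] by rewrite -E !inE eqxx.
have : y \in [set a; b] by rewrite -E !inE eqxx orbT.
rewrite !inE => Hy0 Hx0.
by case/orP: Hx0 => /eqP Ex; case/orP: Hy0 => /eqP Ey; subst x y;
  rewrite ?eqxx ?orbT // in Hxy' *.
Qed.

Lemma pair_uniq r1 c1 r2 c2 p : F r1 c1 = Some p -> F r2 c2 = Some p -> r1 = r2 /\ c1 = c2.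
Proof.
move=> E1 E2.
have Hinj : {in cellT F &, injective fcell}.
  apply/imset_injP; rewrite fcell_img eqn_leq.
  rewrite -fcell_img leq_imset_card /= fcell_img.
  by rewrite -(leq_pmul2l (isT : 0 < 2)) cellT_eqF crossO_le.
have := Hinj (r1, c1) (r2, c2); rewrite !inE /fcell /= E1 E2 => /(_ isT isT erefl).
by case.
Qed.

End Frame.


Section Constr.
Variables (S : finType) (P : {set {set S}}) (F : S -> S -> option {set S}).
Hypothesis HF : room_frame P F.
Hypothesis Hsk : skew F.
Local Notation sp := (same_part P).

Definition role (r c s : S) : nat := if s == r then 0 else if s == c then 1 else 2.
Definition inC (r c : S) (p : {set S}) (s : S) : bool := (s == r) || (s == c) || (s \in p).

Lemma role_le r c s : role r c s <= 2.
Proof. by rewrite /role; case: (s == r); case: (s == c). Qed.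

Lemma roleP r c p s : inC r c p s ->
  [/\ role r c s = 0 -> s = r, role r c s = 1 -> s = c & role r c s = 2 -> s \in p].
Proof.
rewrite /inC /role; case: eqP => [->|_] //=; case: eqP => [->|_] //= Hs.
Qed.

Lemma gc_rc r c p : F r c = Some p -> r != c.
Proof.
move=> E; apply/eqP => Hrc; subst c.
by move: (fr_H2 HF (sp_refl P r)); rewrite E.
Qed.

Lemma gc_nsp r c p s s' : F r c = Some p -> inC r c p s -> inC r c p s' -> s != s' -> ~~ sp s s'.
Proof.
move=> E.
have rc : ~~ sp r c by apply/negP => /(fr_H2 HF); rewrite E.
have row x : x \in p -> ~~ sp r x by move=> Hx; exact: (cell_row_out HF Hsk E Hx).
have col x : x \in p -> ~~ sp c x by move=> Hx; exact: (cell_col_out HF Hsk E Hx).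
have pp x y : x \in p -> y \in p -> x != y -> ~~ sp x y.
  move: (fr_cell HF E) => [a [b [Hab ->]]]; rewrite !inE.
  by case/orP => /eqP ->; case/orP => /eqP ->; rewrite ?eqxx // sp_sym.
rewrite /inC => /orP [/orP [/eqP -> | /eqP ->] | Hs] /orP [/orP [/eqP -> | /eqP ->] | Hs'];
  rewrite ?eqxx // => Hne.
all: first [done | exact: row | exact: col | exact: pp |
  (rewrite sp_sym; first [done | exact: row | exact: col])].
Qed.

Lemma skew_contra a b p q : F a b = Some p -> F b a = Some q -> False.
Proof. by move=> E1 E2; move: (Hsk (i := a) (j := b)); rewrite E1 E2 => H; by have := H (fun e => ltac:(discriminate e)). Qed.

Lemma row_cell r c c' p p' x : F r c = Some p -> F r c' = Some p' -> x \in p -> x \in p' -> c = c'.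
Proof.
move=> E E' H H'; apply: (row_uniq HF Hsk (r := r) (x := x));  by rewrite /mem2 ?E ?E'.
Qed.

Lemma col_cell r r' c p p' x : F r c = Some p -> F r' c = Some p' -> x \in p -> x \in p' -> r = r'.
Proof.
move=> E E' H H'; apply: (col_uniq HF Hsk (c := c) (x := x)); by rewrite /mem2 ?E ?E'.
Qed.

Lemma pair_is r c p x y : F r c = Some p -> x \in p -> y \in p -> x != y -> p = [set x; y].
Proof.
move=> E Hx Hy Hxy; apply/eqP; rewrite eq_sym eqEcard (fr_pair HF E) cards2 Hxy andbT.
by apply/subsetP => z; rewrite !inE => /orP [] /eqP ->.
Qed.

Lemma pair_cell r c r' c' p p' x y : F r c = Some p -> F r' c' = Some p' ->
  x \in p -> y \in p -> x \in p' -> y \in p' -> x != y -> r = r' /\ c = c'.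
Proof.
move=> E E' ? ? ? ? Hxy; apply: (pair_uniq HF Hsk E).
by rewrite E' (pair_is E' _ _ Hxy) // (pair_is E _ _ Hxy).
Qed.

Lemma cls_same r c p r' c' p' s1 s2 : F r c = Some p -> F r' c' = Some p' ->
  inC r c p s1 -> inC r c p s2 -> inC r' c' p' s1 -> inC r' c' p' s2 -> s1 != s2 ->
  cls (role r c s1) (role r c s2) = cls (role r' c' s1) (role r' c' s2) -> r = r' /\ c = c'.
Proof.
move=> E E' i1 i2 i1' i2' ne.
have [a0 a1 a2] := roleP i1; have [b0 b1 b2] := roleP i2.
have [d0 d1 d2] := roleP i1'; have [e0 e1 e2] := roleP i2'.
have l1 := role_le r c s1; have l2 := role_le r c s2.
have l3 := role_le r' c' s1; have l4 := role_le r' c' s2.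
case R1 : (role r c s1) l1 => [|[|[|k]]] // _;
case R2 : (role r c s2) l2 => [|[|[|k]]] // _;
case R3 : (role r' c' s1) l3 => [|[|[|k]]] // _;
case R4 : (role r' c' s2) l4 => [|[|[|k]]] // _ => //= _.
all: try (move: (a0 R1) => ?); try (move: (a1 R1) => ?); try (move: (a2 R1) => ?).
all: try (move: (b0 R2) => ?); try (move: (b1 R2) => ?); try (move: (b2 R2) => ?).
all: try (move: (d0 R3) => ?); try (move: (d1 R3) => ?); try (move: (d2 R3) => ?).
all: try (move: (e0 R4) => ?); try (move: (e1 R4) => ?); try (move: (e2 R4) => ?).
all: subst.
all: try by rewrite eqxx in ne.
all: first [ done | (exfalso; eapply skew_contra; eassumption)
  | (split; [done | eapply row_cell; eassumption])
  | (split; [eapply col_cell; eassumption | done])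
  | (apply: (pair_cell E E' _ _ _ _ ne); assumption) ].
Qed.

Definition gen r c p (b : bool) (j : 'I_6) : {ffun S * 'I_6 -> 'I_3} :=
  [ffun z => if inC r c p z.1 && (val z.2 == pos (role r c z.1) b j)
             then inord (vl (role r c z.1) b) else ord0].

Lemma vl_ok ro b : 0 < vl ro b < 3.
Proof. by rewrite /vl; case: (ro == 2); case: b. Qed.

Lemma pos_lt ro b j : pos ro b j < 6.
Proof. by rewrite /pos ltn_pmod. Qed.

Lemma gen_val r c p b j z : nat_of_ord (gen r c p b j z) =
  if inC r c p z.1 && (val z.2 == pos (role r c z.1) b j) then vl (role r c z.1) b else 0.
Proof.
rewrite ffunE; case: ifP => // _; rewrite inordK //.
by case/andP: (vl_ok (role r c z.1) b).
Qed.

Lemma gen_nz r c p b j z : (gen r c p b j z != ord0) =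
  inC r c p z.1 && (val z.2 == pos (role r c z.1) b j).
Proof.
rewrite -(inj_eq val_inj) /= gen_val; case: ifP => // _.
by case/andP: (vl_ok (role r c z.1) b) => /lt0n_neq0.
Qed.

Lemma inC_card r c p : F r c = Some p -> #|[set s | inC r c p s]| = 4.
Proof.
move=> E.
have -> : [set s | inC r c p s] = [set r; c] :|: p.
  by apply/setP => s; rewrite !inE /inC.
have rp : r \notin p.
  by apply/negP => Hr; move: (cell_row_out HF Hsk E Hr); rewrite sp_refl.
have cp : c \notin p.
  by apply/negP => Hc; move: (cell_col_out HF Hsk E Hc); rewrite sp_refl.
rewrite cardsU (fr_pair HF E) cards2 (gc_rc E).
suff -> : [set r; c] :&: p = set0 by rewrite cards0.
apply/setP => s; rewrite !inE; apply/negP => /andP [/orP [] /eqP -> H].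
  by rewrite H in rp.
by rewrite H in cp.
Qed.

Lemma supp_card r c p b j : F r c = Some p -> #|[set z | gen r c p b j z != ord0]| = 4.
Proof.
move=> E.
have -> : [set z | gen r c p b j z != ord0] =
   [set (s, inord (pos (role r c s) b j) : 'I_6) | s in [set s | inC r c p s]].
  apply/setP => [[s i]]; rewrite inE gen_nz /=; apply/andP/imsetP.
    move=> [Hs /eqP Hi]; exists s; rewrite ?inE //; congr (_, _).
    by apply: val_inj; rewrite /= inordK ?Hi // pos_lt.
  move=> [s' Hs' [-> ->]]; move: Hs'; rewrite inE => ->; split => //.
  by rewrite /= inordK // pos_lt.
rewrite card_imset ?inC_card //.
by move=> x y [].
Qed.


Lemma cls_nz r c p s1 s2 : inC r c p s1 -> inC r c p s2 -> s1 != s2 ->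
  cls (role r c s1) (role r c s2) != 0.
Proof.
move=> i1 i2 ne.
have [a0 a1 a2] := roleP i1; have [b0 b1 b2] := roleP i2.
have l1 := role_le r c s1; have l2 := role_le r c s2.
case R1 : (role r c s1) l1 => [|[|[|k]]] // _;
case R2 : (role r c s2) l2 => [|[|[|k]]] // _ => //=.
- by move: ne; rewrite (a0 R1) (b0 R2) eqxx.
- by move: ne; rewrite (a1 R1) (b1 R2) eqxx.
Qed.

Lemma role2_in r c p s : inC r c p s -> role r c s == 2 -> s \in p.
Proof. by move=> i /eqP; case: (roleP i). Qed.

Lemma no3 r c p s1 s2 s3 : F r c = Some p -> s1 \in p -> s2 \in p -> s3 \in p ->
  s1 != s2 -> s1 != s3 -> s2 != s3 -> False.
Proof.
move=> E h1 h2 h3 n12 n13 n23.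
move: h3; rewrite (pair_is E h1 h2 n12) !inE => /orP [] /eqP Hs; subst s3.
  by rewrite eqxx in n13.
by rewrite eqxx in n23.
Qed.

Lemma same_or_cls r c p r' c' p' s1 s2 : F r c = Some p -> F r' c' = Some p' ->
  inC r c p s1 -> inC r c p s2 -> inC r' c' p' s1 -> inC r' c' p' s2 -> s1 != s2 ->
  ~~ ((r == r') && (c == c')) ->
  cls (role r c s1) (role r c s2) != cls (role r' c' s1) (role r' c' s2).
Proof.
move=> E E' i1 i2 i1' i2' ne nrc; apply/eqP => Hc.
have [Hr Hc'] := cls_same E E' i1 i2 i1' i2' ne Hc.
by move: nrc; rewrite Hr Hc' !eqxx.
Qed.

Lemma shared2 r c p b j r' c' p' b' j' s1 x1 s2 x2 :
  F r c = Some p -> F r' c' = Some p' -> (r, c, b, j) != (r', c', b', j') ->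
  gen r c p b j (s1, x1) != ord0 -> gen r' c' p' b' j' (s1, x1) != ord0 ->
  gen r c p b j (s2, x2) != ord0 -> gen r' c' p' b' j' (s2, x2) != ord0 ->
  (s1, x1) != (s2, x2) ->
  gen r c p b j (s1, x1) != gen r' c' p' b' j' (s1, x1).
Proof.
move=> E E' nidx.
rewrite !gen_nz /= => /andP [i1 /eqP q1] /andP [i1' /eqP q1'] /andP [i2 /eqP q2] /andP [i2' /eqP q2'] nz.
have ne : s1 != s2.
  apply: contra nz => /eqP Hs; subst s2; apply/eqP; congr (_, _); apply: val_inj => /=.
  by rewrite q1 q2.
have e1 : pos (role r c s1) b j = pos (role r' c' s1) b' j' by rewrite -q1 -q1'.
rewrite -(inj_eq val_inj) /= !gen_val /= i1 i1' q1 e1 !eqxx /=.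
apply: (pair_fact (role_le r c s1) (role_le r c s2) (role_le r' c' s1) (role_le r' c' s2)
  (ltn_ord j) (ltn_ord j') (cls_nz i1 i2 ne) (cls_nz i1' i2' ne)).
- case: (boolP ((r == r') && (c == c'))) => Hrc.
    move: Hrc => /andP [/eqP Hr /eqP Hc]; subst r' c'.
    move: E'; rewrite E => [[Hp]]; subst p'.
    rewrite !eqxx /= ?orbF; apply: contra nidx => /eqP [-> /val_inj ->]; by [].
  by rewrite (same_or_cls E E' i1 i2 i1' i2' ne Hrc) orbT.
- by rewrite -q1 -q1'.
- by rewrite -q2 -q2'.
Qed.

Lemma shared3 r c p b j r' c' p' b' j' s1 x1 s2 x2 s3 x3 :
  F r c = Some p -> F r' c' = Some p' -> (r, c, b, j) != (r', c', b', j') ->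
  gen r c p b j (s1, x1) != ord0 -> gen r' c' p' b' j' (s1, x1) != ord0 ->
  gen r c p b j (s2, x2) != ord0 -> gen r' c' p' b' j' (s2, x2) != ord0 ->
  gen r c p b j (s3, x3) != ord0 -> gen r' c' p' b' j' (s3, x3) != ord0 ->
  (s1, x1) != (s2, x2) -> (s1, x1) != (s3, x3) -> (s2, x2) != (s3, x3) -> False.
Proof.
move=> E E' nidx.
rewrite !gen_nz /= => /andP [i1 /eqP q1] /andP [i1' /eqP q1'] /andP [i2 /eqP q2] /andP [i2' /eqP q2']
  /andP [i3 /eqP q3] /andP [i3' /eqP q3'] nz12 nz13 nz23.
have nes x y (ix : 'I_6) (iy : 'I_6) : (x, ix) != (y, iy) -> val ix = pos (role r c x) b j ->
    val iy = pos (role r c y) b j -> x != y.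
  move=> nz qx qy; apply: contra nz => /eqP Hs; subst y; apply/eqP; congr (_, _); apply: val_inj => /=.
  by rewrite qx qy.
have n12 := nes _ _ _ _ nz12 q1 q2; have n13 := nes _ _ _ _ nz13 q1 q3.
have n23 := nes _ _ _ _ nz23 q2 q3.
have := trip_fact (role_le r c s1) (role_le r c s2) (role_le r c s3)
  (role_le r' c' s1) (role_le r' c' s2) (role_le r' c' s3) (ltn_ord j) (ltn_ord j') (b := b) (b' := b').
rewrite (cls_nz i1 i2 n12) (cls_nz i1 i3 n13) (cls_nz i2 i3 n23).
rewrite (cls_nz i1' i2' n12) (cls_nz i1' i3' n13) (cls_nz i2' i3' n23) /=.
rewrite -q1 -q1' -q2 -q2' -q3 -q3' !eqxx /=.
have nall r0 c0 p0 : F r0 c0 = Some p0 -> inC r0 c0 p0 s1 -> inC r0 c0 p0 s2 -> inC r0 c0 p0 s3 ->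
    ~~ [&& role r0 c0 s1 == 2, role r0 c0 s2 == 2 & role r0 c0 s3 == 2].
  move=> E0 j1 j2 j3; apply/negP => /and3P [k1 k2 k3].
  exact: (no3 E0 (role2_in j1 k1) (role2_in j2 k2) (role2_in j3 k3) n12 n13 n23).
rewrite (nall _ _ _ E i1 i2 i3) (nall _ _ _ E' i1' i2' i3') /=.
case: (boolP ((r == r') && (c == c'))) => Hrc.
  move: Hrc => /andP [/eqP Hr /eqP Hc]; subst r' c'.
  move: E'; rewrite E => [[Hp]]; subst p'.
  rewrite !eqxx /=.
  move=> H; suff : false by []; apply: H => //; rewrite orbF.
  apply: contra nidx => /eqP [-> /val_inj ->]; by [].
move=> H; suff : false by []; apply: H => //.
by rewrite (same_or_cls E E' i1 i2 i1' i2' n12 Hrc) (same_or_cls E E' i1 i3 i1' i3' n13 Hrc)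
  (same_or_cls E E' i2 i3 i2' i3' n23 Hrc) orbT.
Qed.

End Constr.


Section Main.
Variables (S : finType) (P : {set {set S}}) (F : S -> S -> option {set S}).
Hypothesis HP : partition P [set: S].
Hypothesis HF : room_frame P F.
Hypothesis Hsk : skew F.
Local Notation sp := (same_part P).

Definition cw (a : S * S * bool * 'I_6) :=
  gen a.1.1.1 a.1.1.2 (fcell F (a.1.1.1, a.1.1.2)) a.1.2 a.2.
Definition Dom := [set a : S * S * bool * 'I_6 | F a.1.1.1 a.1.1.2 != None].

Lemma cw_dist a a' : a \in Dom -> a' \in Dom -> a != a' -> 6 <= hamming (cw a) (cw a').
Proof.
case: a => [[[r c] b] j]; case: a' => [[[r' c'] b'] j'].
rewrite !inE /= /cw /fcell /=.
case E : (F r c) => [p|] // _; case E' : (F r' c') => [p'|] // _ /= nidx.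
apply: ham6.
- exact: (supp_card HF Hsk _ _ E).
- exact: (supp_card HF Hsk _ _ E').
  move=> [s1 x1] [s2 x2]; rewrite !inE => /andP [h1 h1'] /andP [h2 h2'] nz.
  exact: (shared2 HF Hsk E E' nidx h1 h1' h2 h2' nz).
move=> [s1 x1] [s2 x2] [s3 x3]; rewrite !inE => /andP [h1 h1'] /andP [h2 h2'] /andP [h3 h3'].
exact: (shared3 HF Hsk E E' nidx h1 h1' h2 h2' h3 h3').
Qed.

Lemma cw_inj : {in Dom &, injective cw}.
Proof.
move=> a a' Ha Ha' Heq; apply/eqP; apply/negPn/negP => nidx.
have := cw_dist Ha Ha' nidx; rewrite Heq /hamming.
suff -> : [set x | cw a' x != cw a' x] = set0 by rewrite cards0.
by apply/setP => z; rewrite !inE eqxx.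
Qed.


Lemma gen_level (r c : S) (p : {set S}) (b : bool) (j : 'I_6) (k : nat) : 0 < k ->
  [set z | nat_of_ord (gen r c p b j z) == k] =
  [set (s, inord (pos (role r c s) b j) : 'I_6) | s in [set s | inC r c p s && (vl (role r c s) b == k)]].
Proof.
move=> k0; apply/setP => [[s i]]; rewrite inE gen_val /=; apply/idP/imsetP.
  case: ifP => [/andP [Hs /eqP Hi] Hk | _ /eqP Hk]; last by rewrite -Hk in k0.
  exists s; rewrite ?inE ?Hs ?Hk //; congr (_, _).
  by apply: val_inj; rewrite /= inordK ?Hi // pos_lt.
move=> [s' Hs' [-> ->]]; move: Hs'; rewrite inE => /andP [-> Hk] /=.
by rewrite inordK ?pos_lt // eqxx.
Qed.

Lemma level_card (r c : S) (p : {set S}) (b : bool) (j : 'I_6) k : 0 < k ->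
  #|[set z | nat_of_ord (gen r c p b j z) == k]| =
  #|[set s | inC r c p s && (vl (role r c s) b == k)]|.
Proof. by move=> k0; rewrite gen_level // card_imset // => x y []. Qed.

Lemma set_rc r c p : F r c = Some p -> [set s | inC r c p s && (role r c s != 2)] = [set r; c].
Proof.
move=> E; apply/setP => s; rewrite !inE /inC /role.
case: (eqVneq s r) => [->|nr] /=; first by rewrite ?eqxx.
case: (eqVneq s c) => [->|nc] //=; by rewrite andbF.
Qed.

Lemma set_p r c p : F r c = Some p -> [set s | inC r c p s && (role r c s == 2)] = p.
Proof.
move=> E; apply/setP => s; rewrite !inE /inC /role.
have rp : r \notin p.
  by apply/negP => Hr; move: (cell_row_out HF Hsk E Hr); rewrite sp_refl.
have cp : c \notin p.
  by apply/negP => Hc; move: (cell_col_out HF Hsk E Hc); rewrite sp_refl.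
case: (eqVneq s r) => [->|nr] /=; first by rewrite (negbTE rp).
case: (eqVneq s c) => [->|nc] /=; first by rewrite (negbTE cp).
by rewrite andbT.
Qed.

Lemma vl1 ro b : (vl ro b == 1) = ((ro == 2) == b).
Proof. by rewrite /vl; case: (ro == 2); case: b. Qed.
Lemma vl2 ro b : (vl ro b == 2) = ((ro == 2) != b).
Proof. by rewrite /vl; case: (ro == 2); case: b. Qed.

Lemma gen_comp (r c : S) (p : {set S}) (b : bool) (j : 'I_6) : F r c = Some p -> has_composition (gen r c p b j) 2 2.
Proof.
move=> E; rewrite /has_composition !level_card //.
have Ep : forall k, [set s | inC r c p s && (vl (role r c s) b == k)] =
    [set s | inC r c p s && (role r c s == 2)] -> #|[set s | inC r c p s && (vl (role r c s) b == k)]| = 2.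
  by move=> k ->; rewrite (set_p E) (fr_pair HF E).
have Erc : forall k, [set s | inC r c p s && (vl (role r c s) b == k)] =
    [set s | inC r c p s && (role r c s != 2)] -> #|[set s | inC r c p s && (vl (role r c s) b == k)]| = 2.
  by move=> k ->; rewrite (set_rc E) cards2 (gc_rc HF E).
case: b Ep Erc => Ep Erc; split.
- by apply: Ep; apply/setP => s; rewrite !inE /vl; case: (role r c s == 2).
- by apply: Erc; apply/setP => s; rewrite !inE /vl; case: (role r c s == 2).
- by apply: Erc; apply/setP => s; rewrite !inE /vl; case: (role r c s == 2).
- by apply: Ep; apply/setP => s; rewrite !inE /vl; case: (role r c s == 2).
Qed.


Lemma trivP : trivIset P.
Proof. by case/and3P: HP. Qed.
Lemma coverP : cover P = [set: S].
Proof. by case/and3P: HP => /eqP. Qed.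
Lemma set0P : set0 \notin P.
Proof. by case/and3P: HP. Qed.

Lemma sp_block B x y : B \in P -> x \in B -> y \in B -> sp x y.
Proof. by move=> HB Hx Hy; rewrite /same_part (def_pblock trivP HB Hx) (def_pblock trivP HB Hy). Qed.

Lemma gen_group (r c : S) (p : {set S}) (b : bool) (j : 'I_6) B : F r c = Some p -> B \in P ->
  #|[set z in setX B [set: 'I_6] | nat_of_ord (gen r c p b j z) != 0]| <= 1.
Proof.
move=> E HB; apply/card_le1_eqP => [[s i] [s' i']]; rewrite !inE /= !gen_val /=.
case: ifP => [/andP [Hs /eqP Hi] | _]; last by rewrite eqxx andbF.
rewrite andbT => /andP [HsB _].
case: ifP => [/andP [Hs' /eqP Hi'] | _]; last by rewrite eqxx andbF.
rewrite andbT => /andP [HsB' _].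
case: (eqVneq s s') => [Hss|nss].
  subst s'; congr (_, _); apply: val_inj => /=; by rewrite Hi Hi'.
by move: (gc_nsp HF Hsk E Hs Hs' nss); rewrite (sp_block HB HsB HsB').
Qed.

Definition Gs := [set setX B [set: 'I_6] | B in P].

Lemma G_part : partition Gs [set: S * 'I_6].
Proof.
apply/and3P; split.
- apply/eqP/setP => [[s i]]; rewrite inE; apply/bigcupP.
  have : s \in cover P by rewrite coverP inE.
  move/bigcupP => [B HB Hs]; exists (setX B [set: 'I_6]); first by apply: imset_f.
  by rewrite !inE /= Hs.
- apply/trivIsetP => A A' /imsetP [B HB ->] /imsetP [B' HB' ->] neq.
  have nBB' : B != B' by apply: contra neq => /eqP ->.
  have Hd := trivIsetP trivP B B' HB HB' nBB'.
  rewrite -setI_eq0; apply/eqP/setP => [[s i]]; rewrite !inE /=.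
  apply/negP => /andP [/andP [Hs _] /andP [Hs' _]].
  move: Hd; rewrite -setI_eq0 => /eqP/setP/(_ s); by rewrite !inE Hs Hs'.
- apply/negP => /imsetP [B HB E].
  have : B != set0 by apply: contra set0P => /eqP <-.
  case/set0Pn => x Hx.
  have : (x, ord0 : 'I_6) \in (set0 : {set S * 'I_6}) by rewrite E !inE /= Hx.
  by rewrite inE.
Qed.

Lemma G_type t u : has_type P t u -> has_type Gs (6 * t) u.
Proof.
move=> [Hu Ht]; split.
  rewrite card_in_imset ?Hu // => B B' _ _ E; apply/setP => x.
  move/setP: E => /(_ (x, ord0 : 'I_6)); by rewrite !inE /= !andbT.
move=> A /imsetP [B HB ->]; by rewrite cardsX Ht // cardsT card_ord mulnC.
Qed.

Lemma crossO_card t u : has_type P t u -> #|crossO P| = (u * t) * (u * t - t).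
Proof.
move=> [Hu Ht].
have HS : #|S| = u * t.
  by rewrite -cardsT (card_uniform_partition (n := t) _ HP) ?Hu // => B HB; apply: Ht.
rewrite /crossO card_sum -(pair_bigA _ (fun s x => (~~ sp s x : nat))) /=.
have Hs s : \sum_x (~~ sp s x : nat) = u * t - t.
  rewrite -card_sum.
  have -> : [set x | ~~ sp s x] = ~: pblock P s.
    apply/setP => x; rewrite !inE /same_part eq_pblock //; first exact: trivP.
    by rewrite coverP inE.
  have Hc : #|pblock P s| = t by apply: Ht; apply: pblock_mem; rewrite coverP inE.
  by move: (cardsC (pblock P s)); rewrite Hc HS => <-; rewrite addKn.
under eq_bigr do rewrite Hs.
by rewrite sum_nat_const -HS.
Qed.

Lemma Dom_card : #|Dom| = #|cellT F| * 2 * 6.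
Proof.
have -> : Dom = setX (setX (cellT F) [set: bool]) [set: 'I_6].
  by apply/setP => [[[[r c] b] j]]; rewrite !inE /= ?andbT.
by rewrite !cardsX !cardsT card_bool card_ord.
Qed.

End Main.

Theorem mainTheorem5 (t u : nat) :
  (exists (S : finType) (P : {set {set S}}) (F : S -> S -> option {set S}),
      partition P [set: S] /\ has_type P t u /\ room_frame P F /\ skew F) ->
  exists (X : finType) (G : {set {set X}}) (C : {set {ffun X -> 'I_3}}),
    is_GDC G C 2 2 6 /\ has_type G (6 * t) u /\ #|C| = 6 * t ^ 2 * u * (u - 1).
Proof.
move=> [S [P [F [HP [Ht [HF Hsk]]]]]].
exists (S * 'I_6)%type, (Gs P), (cw F @: Dom F); split; last split.
- split.
  + exact: G_part.
  + move=> w /imsetP [[[[r c] b] j] Ha ->]; move: Ha; rewrite inE /cw /fcell /=.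
    case E : (F r c) => [p|] // _ /=; exact: (gen_comp HF Hsk _ _ E).
  + move=> w w' /imsetP [a Ha ->] /imsetP [a' Ha' ->] neq.
    apply: (cw_dist HF Hsk Ha Ha'); by apply: contra neq => /eqP ->.
  + move=> w B' /imsetP [[[[r c] b] j] Ha ->] /imsetP [B HB ->]; move: Ha; rewrite inE /cw /fcell /=.
    case E : (F r c) => [p|] // _ /=; exact: (gen_group HP HF Hsk _ _ E HB).
- exact: G_type.
- rewrite card_in_imset; last exact: (cw_inj HF Hsk).
  rewrite Dom_card.
  have H2 := cellT_eqF HF Hsk; rewrite (crossO_card HP Ht) in H2.
  nia.
Qed.
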